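(* Every $\sigma$-scattered metrizable space is a $\Delta$-space.
   Context: A space is $\sigma$-scattered if it is a countable union of scattered subspaces (a space is scattered if every nonempty subset has a point isolated in that subset). A topological space $X$ is a $\Delta$-space if for every decreasing sequence $\{D_n:n\in\omega\}$ of subsets of $X$ with $\bigcap_n D_n=\emptyset$ there is a decreasing sequence $\{V_n:n\in\omega\}$ of open subsets of $X$ with $D_n\subseteq V_n$ for all $n$ and $\bigcap_n V_n=\emptyset$. *)

(* Defs.v *)
From mathcomp Require Import all_boot all_order all_algebra.
From mathcomp Require Import all_classical all_reals all_analysis.
From mathcomp Require Import Rstruct Rstruct_topology.
Set Implicit Arguments. Unset Strict Implicit. Unset Printing Implicit Defensive.
Import Order.TTheory GRing.Theory Num.Theory.
Local Open Scope classical_set_scope.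
Local Open Scope ring_scope.

Definition isolated_in {T : topologicalType} (B : set T) (x : T) : Prop :=
  B x /\ exists U : set T, open U /\ U `&` B = [set x].

Definition scattered {T : topologicalType} (S : set T) : Prop :=
  forall B : set T, B `<=` S -> B !=set0 -> exists x, isolated_in B x.

Definition sigma_scattered (T : topologicalType) : Prop :=
  exists S : nat -> set T, (forall n, scattered (S n)) /\ \bigcup_n S n = setT.

Definition metrizable (T : topologicalType) : Prop :=
  exists d : T -> T -> Rdefinitions.R,
    [/\ forall x y, d x y = 0 <-> x = y,
        forall x y, d x y = d y x,
        forall x y z, d x z <= d x y + d y z &
        forall A : set T, open A <->
          (forall x, A x -> exists2 e : Rdefinitions.R, 0 < e &
              [set y | d x y < e] `<=` A)].

Definition Delta_space (T : topologicalType) : Prop :=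
  forall D : nat -> set T,
    (forall n, D n.+1 `<=` D n) -> \bigcap_n D n = set0 ->
    exists V : nat -> set T,
      [/\ forall n, open (V n), forall n, V n.+1 `<=` V n,
          forall n, D n `<=` V n & \bigcap_n V n = set0].

(* Main.v *)
Require Import Defs.
From mathcomp Require Import all_boot all_order all_algebra.
From mathcomp Require Import all_classical all_reals all_analysis.
From mathcomp Require Import Rstruct Rstruct_topology.
From mathcomp Require Import lra.
Import Order.TTheory GRing.Theory Num.Theory.
Local Open Scope classical_set_scope.
Local Open Scope ring_scope.

Section Tower.
Context {T : topologicalType} (S : set T).

Definition gder (F : set T) : set T := [set x | F x /\ ~ isolated_in F x].
Definition Inter (G : set (set T)) : set T := [set z | S z /\ forall F, G F -> F z].
Definition tclosed (Fam : set (set T)) :=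
  (forall F, Fam F -> Fam (gder F)) /\ (forall G, G `<=` Fam -> Fam (Inter G)).
Definition Lfam : set (set T) := fun F => forall Fam, tclosed Fam -> Fam F.

Lemma gder_sub F : gder F `<=` F.
Proof. by move=> x []. Qed.

Lemma L_closed : tclosed Lfam.
Proof.
split.
- move=> F LF Fam cF; apply: cF.1; exact: LF.
- move=> G HG Fam cF; apply: cF.2 => F GF; exact: HG.
Qed.

Lemma L_ind (P : set T -> Prop) :
  tclosed [set F | Lfam F /\ P F] -> forall F, Lfam F -> P F.
Proof. move=> c F LF; exact: (LF _ c).2. Qed.

Lemma L_sub : forall F, Lfam F -> F `<=` S.
Proof.
apply: (L_ind (fun F => F `<=` S)); split.
- move=> F [LF H]; split; first exact: L_closed.1.
  move=> x /gder_sub; exact: H.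
- move=> G HG; split; first by apply: L_closed.2 => F /HG [].
  by move=> x [].
Qed.

Definition extreme (C : set T) :=
  forall F, Lfam F -> C `<=` F -> F <> C -> C `<=` gder F.

Lemma lemA C : Lfam C -> extreme C ->
  forall F, Lfam F -> C `<=` F \/ F `<=` gder C.
Proof.
move=> LC eC.
apply: (L_ind (fun F => C `<=` F \/ F `<=` gder C)); split.
- move=> F [LF [HCF|HFg]]; (split; first exact: L_closed.1).
  + have [->|ne] := pselect (F = C); first by right.
    left; exact: eC.
  + right => x [Fx _]; exact: HFg.
- move=> G HG; split; first by apply: L_closed.2 => F /HG [].
  have [[F [GF HF]]|nex] := pselect (exists F, G F /\ F `<=` gder C).
  + right => x [Sx Hall]; apply: HF; exact: Hall.
  + left => x Cx; split; first exact: (L_sub _ LC).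
    move=> F GF; have [_ [h|h]] := HG F GF; first exact: h.
    by exfalso; apply: nex; exists F.
Qed.

Lemma lemB : forall C, Lfam C -> extreme C.
Proof.
apply: (L_ind extreme); split.
- move=> C [LC eC]; split; first exact: L_closed.1.
  move=> F LF sub ne.
  have [h|h] := lemA _ LC eC _ LF.
  + have [->|ne2] := pselect (F = C); first by [].
    move=> x gx; apply: (eC F LF h ne2); exact: gder_sub.
  + by exfalso; apply: ne; rewrite eqEsubset; split.
- move=> G HG; split; first by apply: L_closed.2 => F /HG [].
  move=> F LF sub ne.
  have [[C [GC nFC]]|nex] := pselect (exists C, G C /\ ~ F `<=` C).
  + have [LC eC] := HG C GC.
    have [h|h] := lemA _ LC eC _ LF.
    * have neFC : F <> C by move=> E; apply: nFC; rewrite E.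
      move=> x Ix; apply: (eC F LF h neFC); exact: Ix.2.
    * by exfalso; apply: nFC => x /h /gder_sub.
  + exfalso; apply: ne; rewrite eqEsubset; split => //.
    move=> x Fx; split; first exact: (L_sub _ LF).
    move=> C GC; have [//|] := pselect (F `<=` C); first by move=> h; exact: h.
    by move=> h; exfalso; apply: nex; exists C.
Qed.

Lemma chain F C : Lfam F -> Lfam C -> C `<=` F \/ F `<=` C.
Proof.
move=> LF LC; have [h|h] := lemA _ LC (lemB _ LC) _ LF; first by left.
by right => x /h /gder_sub.
Qed.

Definition Lx (x : T) : set T := Inter (fun F => Lfam F /\ F x).

Lemma Lx_L x : Lfam (Lx x).
Proof. by apply: L_closed.2 => F []. Qed.

Lemma Lx_self x : S x -> Lx x x.
Proof. by move=> Sx; split => // F []. Qed.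

Lemma Lx_iso x : scattered S -> S x -> isolated_in (Lx x) x.
Proof.
move=> sc Sx; apply: contrapT => niso.
have gx : gder (Lx x) x by split; [exact: Lx_self|].
have sub : Lx x `<=` gder (Lx x).
  move=> z [Sz Hz]; apply: Hz; split => //; exact: L_closed.1 _ (Lx_L x).
have [y iy] := sc (Lx x) (fun z h => h.1) (ex_intro _ x (Lx_self _ Sx)).
by have [_ ] := sub y iy.1.
Qed.

Lemma Lx_asym x y : S x -> S y -> ~ Lx x y -> ~ Lx y x -> False.
Proof.
move=> Sx Sy nxy nyx; have [h|h] := chain _ _ (Lx_L x) (Lx_L y).
- by apply: nxy; apply: h; exact: Lx_self.
- by apply: nyx; apply: h; exact: Lx_self.
Qed.

End Tower.

Section Metric.
Variable T : topologicalType.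
Variable d : T -> T -> Rdefinitions.R.
Hypothesis d0 : forall x y, d x y = 0 <-> x = y.
Hypothesis dsym : forall x y, d x y = d y x.
Hypothesis dtri : forall x y z, d x z <= d x y + d y z.
Hypothesis dopen : forall A : set T, open A <->
  (forall x, A x -> exists2 e : Rdefinitions.R, 0 < e & [set y | d x y < e] `<=` A).

Lemma dge0 x y : 0 <= d x y.
Proof.
have h0 : d x x = 0 by apply/d0.
have := dtri x y x; rewrite h0 (dsym y x); lra.
Qed.

Lemma scat_eps (S : set T) : scattered S -> exists eps : T -> Rdefinitions.R,
  (forall x, S x -> 0 < eps x) /\
  forall x y, S x -> S y -> d x y < eps x -> d x y < eps y -> x = y.
Proof.
move=> sc.
have H : forall x, exists e : Rdefinitions.R, S x -> 0 < e /\
    forall y, S y -> d x y < e -> y = x \/ ~ Lx S x y.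
  move=> x; have [Sx|nSx] := pselect (S x); last by exists 1.
  have [_ [U [oU UL]]] := @Lx_iso T S x sc Sx.
  have UxL : (U `&` Lx S x) x by rewrite UL.
  have Ux : U x by case: UxL.
  have [e e0 be] := (dopen U).1 oU x Ux.
  exists e => _; split => // y Sy dy.
  have [Ly|nLy] := pselect (Lx S x y); last by right.
  left; have : (U `&` Lx S x) y by split => //; apply: be.
  by rewrite UL.
have [eps Heps] := choice H.
exists eps; split; first by move=> x /(Heps x) [].
move=> x y Sx Sy h1 h2.
have [_ H1] := Heps x Sx; have [_ H2] := Heps y Sy.
case: (H1 y Sy h1) => [->//|n1].
have h2' : d y x < eps y by rewrite dsym.
case: (H2 x Sx h2') => [->//|n2].
exfalso; exact: (@Lx_asym T S x y Sx Sy n1 n2).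
Qed.

Lemma sep_cd (E : set T) (del : Rdefinitions.R) : 0 < del ->
  (forall x y, E x -> E y -> d x y < del -> x = y) ->
  forall z, exists2 r : Rdefinitions.R, 0 < r & forall e, E e -> d z e < r -> e = z.
Proof.
move=> dp sep z.
have [[e [Ee [dze ne]]]|nex] := pselect (exists e, E e /\ d z e < del / 2 /\ e <> z).
- exists (d z e).
    have := dge0 z e; rewrite le_eqVlt => /orP [/eqP h|//].
    by exfalso; apply: ne; symmetry; apply/(d0 z e).1; rewrite -h.
  move=> e' Ee' d'.
  have ee : e' = e.
    apply: sep => //; have := dtri e' z e; rewrite (dsym e' z); lra.
  by rewrite ee ltxx in d'.
- exists (del / 2); first lra.
  move=> e Ee de; apply: contrapT => ne; apply: nex; by exists e.
Qed.

End Metric.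

Theorem proposition4p1 (T : topologicalType) :
  metrizable T -> sigma_scattered T -> Delta_space T.
Proof.
move=> [d [d0 dsym dtri dopen]] [S [scS cov]] D Ddec Dcap.
have [eps Heps] := choice (fun k => @scat_eps _ _ dsym dopen _ (scS k)).
pose E k n := [set x | S k x /\ 1 <= eps k x * n.+1%:R].
have sepE : forall k n x y, E k n x -> E k n y -> d x y < n.+1%:R^-1 -> x = y.
  move=> k n x y [Sx ex] [Sy ey] dxy.
  have np : (0 : Rdefinitions.R) < n.+1%:R by rewrite ltr0Sn.
  move: dxy; rewrite -div1r ltr_pdivlMr // => dxy.
  apply: (Heps k).2 => //; nra.
have cdE : forall k n z, exists2 r : Rdefinitions.R, 0 < r &
    forall e, E k n e -> d z e < r -> e = z.
  move=> k n; apply: (@sep_cd _ _ d0 dsym dtri _ (n.+1%:R^-1)).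
    by rewrite invr_gt0 ltr0Sn.
  exact: sepE.
have fin : forall n z m, exists r : Rdefinitions.R, 0 < r /\
    forall k, (k <= m)%N -> forall e, E k n e -> d z e < r -> e = z.
  move=> n z; elim=> [|m [r1 [r1p H1]]].
    have [r rp Hr] := cdE 0%N n z; exists r; split => // k.
    by rewrite leqn0 => /eqP ->.
  have [r2 r2p H2] := cdE m.+1 n z.
  exists (Order.min r1 r2); split; first by rewrite lt_min r1p r2p.
  move=> k; rewrite leq_eqVlt => /orP [/eqP -> e Ee|].
    by rewrite lt_min => /andP [_ h]; exact: H2.
  rewrite ltnS => km e Ee; rewrite lt_min => /andP [h _]; exact: H1 km e Ee h.
have [rad Hrad] := choice (fun p : nat * T => fin p.1 p.2 p.1).
have cover : forall y, exists k n, E k n y.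
  move=> y; have : (\bigcup_n S n) y by rewrite cov.
  case=> k _ Sky; exists k.
  have ep := (Heps k).1 y Sky.
  have ip : 0 < (eps k y)^-1 by rewrite invr_gt0.
  have := archi_boundP (ltW ip).
  set n := Num.Def.archi_bound _ => hn.
  exists n; split => //.
  move: hn; rewrite -[X in X < _]mulr1 ltr_pdivrMl // => hn.
  rewrite -addn1 natrD; lra.
have mono : forall k n m y, E k n y -> (n <= m)%N -> E k m y.
  move=> k n m y [Sy ey] nm; split => //.
  have ep := (Heps k).1 y Sy.
  have : (n.+1%:R : Rdefinitions.R) <= m.+1%:R by rewrite ler_nat.
  nra.
have Dle : forall m j, (m <= j)%N -> D j `<=` D m.
  move=> m; elim=> [|j IH].
    by rewrite leqn0 => /eqP ->.
  rewrite leq_eqVlt => /orP [/eqP -> //|].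
  rewrite ltnS => mj x Dx; apply: (IH mj x); exact: Ddec.
have notin : forall y, exists m, ~ D m y.
  move=> y; have hy : ~ (\bigcap_n D n) y by rewrite Dcap.
  apply: contrapT => h; apply: hy => n _; apply: contrapT => h2; apply: h; by exists n.
exists (fun n => [set y | exists j, (n <= j)%N /\ exists x, D j x /\ d x y < rad (j, x)]).
split.
- move=> n; apply/(dopen _).2 => y [j [nj [x [Dx dxy]]]].
  exists (rad (j, x) - d x y); first by rewrite subr_gt0.
  move=> z /= dz; exists j; split => //; exists x; split => //.
  have := dtri x y z; lra.
- move=> n y [j [nj rest]]; exists j; split => //; exact: ltnW.
- move=> n y Dy; exists n; split => //; exists y; split => //.
  have -> : d y y = 0 by apply/d0.
  exact: (Hrad (n, y)).1.
- rewrite -subset0 => y Hy.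
  have [k [n0 Ey]] := cover y.
  have [m nDm] := notin y.
  have [j [Nj [x [Dx dxy]]]] := Hy (maxn (maxn k n0) m) I.
  have kj : (k <= j)%N := leq_trans (leq_trans (leq_maxl k n0) (leq_maxl _ m)) Nj.
  have n0j : (n0 <= j)%N := leq_trans (leq_trans (leq_maxr k n0) (leq_maxl _ m)) Nj.
  have mj : (m <= j)%N := leq_trans (leq_maxr _ m) Nj.
  have Eyj := mono k n0 j y Ey n0j.
  have yx : y = x := (Hrad (j, x)).2 k kj y Eyj dxy.
  by apply: nDm; apply: (Dle m j mj); rewrite yx.
Qed.
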